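(* Consider the MPG algorithm described in the context, and suppose that Assumption (A1) holds and that for each $j=1,\ldots,m$ the gradient $\nabla G_j$ is Lipschitz continuous with constant $L_j>0$. Then, for a given tolerance $\varepsilon>0$, the MPG algorithm generates a point $x^k$ such that $|\theta_\alpha(x^k)|\le\varepsilon$ in at most $\mathcal{O}(1/\varepsilon)$ iterations (that is, there is a constant $C>0$, independent of $\varepsilon$, such that some iterate $x^k$ with $k\le C/\varepsilon$ satisfies $|\theta_\alpha(x^k)|\le\varepsilon$).
   Context: Let $F:\mathbb{R}^n\to(\mathbb{R}\cup\{+\infty\})^m$, $F=(F_1,\ldots,F_m)$, with $F_j=G_j+H_j$ for $j=1,\ldots,m$, where: (i) each $G_j:\mathbb{R}^n\to\mathbb{R}$ is continuously differentiable and convex; (ii) each $H_j:\mathbb{R}^n\to\mathbb{R}\cup\{+\infty\}$ is proper, convex and continuous on its domain; (iii) $\mathrm{dom}(F):=\{x: F_j(x)<+\infty\ \forall j\}$ is nonempty and closed. For $u,v\in\mathbb{R}^m$, $u\preceq v$ means $u_j\le v_j$ for all $j$. Assumption (A1): for every sequence $\{y^k\}\subset\mathrm{dom}(F)$ with $F(y^{k+1})\preceq F(y^k)$ for all $k$, there exists $y\in\mathrm{dom}(F)$ with $F(y)\preceq F(y^k)$ for all $k$. For $x\in\mathrm{dom}(F)$ and $\alpha>0$ define $\psi_x(u):=\max_{j=1,\ldots,m}\big(\nabla G_j(x)^\top(u-x)+H_j(u)-H_j(x)\big)$, $p_\alpha(x):=\arg\min_{u\in\mathbb{R}^n}\psi_x(u)+\frac{1}{2\alpha}\|u-x\|^2$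 (unique minimizer), and $\theta_\alpha(x):=\psi_x(p_\alpha(x))+\frac{1}{2\alpha}\|p_\alpha(x)-x\|^2$ (one has $\theta_\alpha\le 0$, with equality exactly at weakly Pareto optimal points). MPG algorithm. Step 0: choose $x^0\in\mathrm{dom}(F)$, $\alpha>0$, $\gamma\in(0,2/\alpha)$, $0<\tau_1<\tau_2<1$; set $k=0$. Step 1: compute $p^k:=p_\alpha(x^k)$ and $\theta_\alpha(x^k)$. Step 2: if $\theta_\alpha(x^k)=0$, stop. Step 3: set $d^k:=p^k-x^k$, take $j_k^*\in\arg\max_{j}\nabla G_j(x^k)^\top d^k$, set $t=1$. Step 3.1: if $G_{j_k^*}(x^k+td^k)\le G_{j_k^*}(x^k)+t\nabla G_{j_k^*}(x^k)^\top d^k+t\frac{\gamma}{2}\|d^k\|^2$, go to Step 3.2; otherwise replace $t$ by some value in $[\tau_1 t,\tau_2 t]$ and repeat Step 3.1. Step 3.2: if $F(x^k+td^k)\preceq F(x^k)$, set $t_k=t$ and go to Step 4. Step 3.3: replace $t$ by some value in $[\tau_1 t,\tau_2 t]$; if $G_j(x^k+td^k)\le G_j(x^k)+t\nabla G_j(x^k)^\top d^k+t\frac{\gamma}{2}\|d^k\|^2$ for all $j=1,\ldots,m$, set $t_k=t$ and go to Step 4; otherwise repeat Step 3.3. Step 4: $x^{k+1}:=x^k+t_kd^k$, $k\leftarrow k+1$, go to Step 1. *)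

(* Defs.v *)
From HB Require Import structures.
From mathcomp Require Import all_boot all_order all_algebra.
From mathcomp Require Import all_classical all_reals all_analysis.
Set Implicit Arguments. Unset Strict Implicit. Unset Printing Implicit Defensive.
Import Order.TTheory GRing.Theory Num.Theory.
Import numFieldNormedType.Exports.
Local Open Scope ring_scope.
Local Open Scope classical_set_scope.

Section MPG.
Variables (R : realType) (n m : nat).
Notation vec := 'rV[R]_n.

Definition dot (u v : vec) : R := \sum_(i < n) u 0 i * v 0 i.
Definition enorm2 (u : vec) : R := dot u u.
Definition enorm (u : vec) : R := Num.sqrt (enorm2 u).

Definition convex_real (f : vec -> R) : Prop :=
  forall x y (t : R), 0 <= t <= 1 ->
    f (t *: x + (1 - t) *: y) <= t * f x + (1 - t) * f y.

Definition convex_ext (f : vec -> \bar R) : Prop :=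
  forall x y (t : R), 0 <= t <= 1 -> (f x < +oo)%E -> (f y < +oo)%E ->
    (f (t *: x + (1 - t) *: y)%R <= t%:E * f x + (1 - t)%:E * f y)%E.

(* effective domain of F = (G_j + H_j)_j  (G_j is finite everywhere) *)
Definition domF (H : 'I_m -> vec -> \bar R) : set vec :=
  [set x | forall j, (H j x < +oo)%E].

Definition Fval (G : 'I_m -> vec -> R) (H : 'I_m -> vec -> \bar R)
  (j : 'I_m) (x : vec) : \bar R := ((G j x)%:E + H j x)%E.

Definition Fle (G : 'I_m -> vec -> R) (H : 'I_m -> vec -> \bar R)
  (y x : vec) : Prop := forall j, (Fval G H j y <= Fval G H j x)%E.

Definition psi (gradG : 'I_m -> vec -> vec) (H : 'I_m -> vec -> \bar R)
  (x u : vec) : \bar R :=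
  (\big[maxe/-oo]_(j < m) ((dot (gradG j x) (u - x)%R)%:E + (H j u - H j x)))%E.

Definition phi (alpha : R) gradG H (x u : vec) : \bar R :=
  (psi gradG H x u + ((2 * alpha)^-1 * enorm2 (u - x))%R%:E)%E.

Definition is_palpha (alpha : R) gradG H (x p : vec) : Prop :=
  forall u, (phi alpha gradG H x p <= phi alpha gradG H x u)%E.

Definition theta (alpha : R) gradG H (x : vec) : \bar R :=
  ereal_inf (range (phi alpha gradG H x)).

Definition descent_cond (gamma : R) (G : 'I_m -> vec -> R) gradG
  (x d : vec) (j : 'I_m) (t : R) : Prop :=
  G j (x + t *: d) <= G j x + t * dot (gradG j x) d + t * (gamma / 2) * enorm2 d.

(* One iteration (Steps 1-4) of MPG from x (with theta_alpha(x) <> 0) to x'.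
   s is the sequence of trial step sizes: s 0 = 1 and each replacement picks
   a value in [tau1 t, tau2 t].  N1 is the exit of Step 3.1; then either
   Step 3.2 accepts s N1, or Step 3.3 accepts the first s N2 (N2 > N1)
   satisfying the descent condition for all j. *)
Definition mpg_step (alpha gamma tau1 tau2 : R) (G : 'I_m -> vec -> R)
  (gradG : 'I_m -> vec -> vec) (H : 'I_m -> vec -> \bar R) (x x' : vec) : Prop :=
  exists (p : vec) (jstar : 'I_m) (s : nat -> R) (N1 : nat) (tk : R),
    is_palpha alpha gradG H x p /\
    let d := p - x in
    (forall j, dot (gradG j x) d <= dot (gradG jstar x) d) /\
    s 0%N = 1 /\
    (forall i, tau1 * s i <= s i.+1 <= tau2 * s i) /\
    descent_cond gamma G gradG x d jstar (s N1) /\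
    (forall i, (i < N1)%N -> ~ descent_cond gamma G gradG x d jstar (s i)) /\
    ((Fle G H (x + s N1 *: d) x /\ tk = s N1) \/
     (~ Fle G H (x + s N1 *: d) x /\
      exists N2, (N1 < N2)%N /\
        (forall j, descent_cond gamma G gradG x d j (s N2)) /\
        (forall i, (N1 < i < N2)%N ->
           ~ (forall j, descent_cond gamma G gradG x d j (s i))) /\
        tk = s N2)) /\
    x' = x + tk *: d.

Definition mpg_run (alpha gamma tau1 tau2 : R) G gradG H (x : nat -> vec) : Prop :=
  forall k, theta alpha gradG H (x k) <> 0%E ->
    mpg_step alpha gamma tau1 tau2 G gradG H (x k) (x k.+1).

End MPG.

(* Main.v *)
Require Import Defs.
From HB Require Import structures.
From mathcomp Require Import all_boot all_order all_algebra.
From mathcomp Require Import all_classical all_reals all_analysis.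
From mathcomp Require Import ring lra.
Import Order.TTheory GRing.Theory Num.Theory.
Import numFieldNormedType.Exports.
Local Open Scope ring_scope.
Local Open Scope classical_set_scope.

Section Vec.
Variables (R : realType) (n : nat).
Implicit Types (u v w : 'rV[R]_n).

Lemma dotDl u v w : dot (u + v) w = dot u w + dot v w.
Proof. by rewrite /dot -big_split /=; apply: eq_bigr => i _; rewrite mxE mulrDl. Qed.
Lemma dotZl (a : R) u w : dot (a *: u) w = a * dot u w.
Proof. by rewrite /dot mulr_sumr; apply: eq_bigr => i _; rewrite mxE mulrA. Qed.
Lemma dotC u v : dot u v = dot v u.
Proof. by rewrite /dot; apply: eq_bigr => i _; rewrite mulrC. Qed.
Lemma dotDr u v w : dot u (v + w) = dot u v + dot u w.
Proof. by rewrite dotC dotDl !(dotC u). Qed.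
Lemma dotZr (a : R) u w : dot u (a *: w) = a * dot u w.
Proof. by rewrite dotC dotZl dotC. Qed.
Lemma dotNl u w : dot (- u) w = - dot u w.
Proof. by rewrite -scaleN1r dotZl mulN1r. Qed.
Lemma dotNr u w : dot u (- w) = - dot u w.
Proof. by rewrite dotC dotNl dotC. Qed.
Lemma dotBl u v w : dot (u - v) w = dot u w - dot v w.
Proof. by rewrite dotDl dotNl. Qed.
Lemma dotBr u v w : dot u (v - w) = dot u v - dot u w.
Proof. by rewrite dotDr dotNr. Qed.

Lemma enorm2_ge0 u : 0 <= enorm2 u.
Proof. by apply: sumr_ge0 => i _; rewrite -expr2 sqr_ge0. Qed.

Lemma enorm_ge0 u : 0 <= enorm u.
Proof. exact: sqrtr_ge0. Qed.

Lemma enorm_sqr u : enorm u ^+ 2 = enorm2 u.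
Proof. by rewrite sqr_sqrtr // enorm2_ge0. Qed.

Lemma enorm2Z (a : R) u : enorm2 (a *: u) = a ^+ 2 * enorm2 u.
Proof. by rewrite /enorm2 dotZl dotZr mulrA expr2. Qed.

Lemma enormZ (a : R) u : enorm (a *: u) = `|a| * enorm u.
Proof. by rewrite /enorm enorm2Z sqrtrM ?sqr_ge0 // sqrtr_sqr. Qed.

Lemma CS u v : dot u v <= enorm u * enorm v.
Proof.
set A := enorm2 u; set B := enorm2 v; set D := dot u v.
have key : forall l : R, 0 <= l ^+ 2 * A - 2 * l * D + B.
  move=> l; have := enorm2_ge0 (l *: u - v).
  rewrite /enorm2 !(dotBl, dotBr, dotZl, dotZr) -/A -/B -/D (dotC v u) -/D.
  move=> h; apply: le_trans h _; rewrite le_eqVlt; apply/orP; left; apply/eqP.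
  by rewrite /A /B /enorm2; ring.
have hA : 0 <= A := enorm2_ge0 u.
have hB : 0 <= B := enorm2_ge0 v.
have hD2 : D ^+ 2 <= A * B.
  have [A0|Apos] := eqVneq A 0.
    rewrite A0 mul0r.
    have [D0|Dn0] := eqVneq D 0; first by rewrite D0 expr0n.
    have := key ((B + 1) / (2 * D)); rewrite A0 mulr0 add0r.
    have -> : 2 * ((B + 1) / (2 * D)) * D = B + 1.
      by field.
    lra.
  have Ap : 0 < A by rewrite lt_neqAle eq_sym Apos hA.
  have := key (D / A).
  have -> : (D / A) ^+ 2 * A - 2 * (D / A) * D + B = B - D ^+ 2 / A.
    by field.
  rewrite subr_ge0 ler_pdivrMr // => h; by rewrite mulrC.
have sA := sqrtr_ge0 A; have sB := sqrtr_ge0 B.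
have eA : Num.sqrt A ^+ 2 = A by rewrite sqr_sqrtr.
have eB : Num.sqrt B ^+ 2 = B by rewrite sqr_sqrtr.
rewrite /enorm -/A -/B.
rewrite -eA -eB in hD2.
have := mulr_ge0 sA sB.
nra.
Qed.

End Vec.
Lemma grad_ineq (R : realType) (n : nat) (g : 'rV[R]_n -> R) (gr : 'rV[R]_n) y z :
  convex_real g -> differentiable g y -> (forall h, 'd g y h = dot gr h) ->
  g y + dot gr (z - y) <= g z.
Proof.
move=> cvx dg dE.
set h := z - y.
have der : derivable g y h by apply: diff_derivable.
have cv := cvg_dnbhs_at_right der.
have : 'D_h g y <= g z - g y.
  apply: (cvgr_to_le cv).
  near=> s.
  have s0 : 0 < s by near: s; exact: nbhs_right_gt.
  have s1 : s < 1 by near: s; exact: nbhs_right_lt.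
  rewrite /= ler_pdivrMl // .
  have -> : s *: h + y = s *: z + (1 - s) *: y.
    by rewrite /h scalerBr scalerBl scale1r addrA addrAC.
  have := cvx z y s; rewrite (ltW s0) (ltW s1) => /(_ isT).
  move=> H; apply: le_trans; first by apply: lerB H (lexx _).
  rewrite le_eqVlt; apply/orP; left; apply/eqP; ring.
rewrite deriveE // dE; lra.
Unshelve. all: by end_near.
Qed.

Lemma descent_lemma (R : realType) (n m : nat) (G : 'I_m -> 'rV[R]_n -> R)
  (gradG : 'I_m -> 'rV[R]_n -> 'rV[R]_n) (L gamma t : R) j x d :
  (forall y, differentiable (G j) y /\ forall h, 'd (G j) y h = dot (gradG j y) h) ->
  convex_real (G j) ->
  (forall y z, enorm (gradG j y - gradG j z) <= L * enorm (y - z)) ->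
  0 <= L -> 0 <= t -> t * L <= gamma / 2 -> descent_cond gamma G gradG x d j t.
Proof.
move=> hd cvx lip Lp t0 tL; rewrite /descent_cond.
set y := x + t *: d.
have gi := @grad_ineq _ _ _ _ y x cvx (proj1 (hd y)) (proj2 (hd y)).
have e1 : x - y = - (t *: d) by rewrite /y opprD addrA subrr add0r.
rewrite e1 dotNr dotZr in gi.
have e2 : dot (gradG j y) d = dot (gradG j x) d + dot (gradG j y - gradG j x) d.
  by rewrite dotBl addrC subrK.
have cs := @CS _ _ (gradG j y - gradG j x) d.
have lp := lip y x.
have e3 : y - x = t *: d by rewrite /y addrC addKr.
rewrite e3 enormZ ger0_norm // in lp.
have En := @enorm_ge0 _ _ d.
have E2 := @enorm_sqr _ _ d.
have E0 := @enorm2_ge0 _ _ d.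
have h1 : dot (gradG j y - gradG j x) d <= L * t * enorm2 d.
  apply: le_trans cs _; rewrite -E2 expr2 mulrA; apply: ler_wpM2r => //.
  by rewrite -mulrA.
have h2 : t * (L * t * enorm2 d) <= t * (gamma / 2) * enorm2 d.
  rewrite mulrA; apply: ler_wpM2r => //; nra.
nra.
Qed.

Lemma fin_ex (R : realType) (e : \bar R) : e != -oo%E -> (e < +oo)%E -> e = (fine e)%:E.
Proof. by case: e. Qed.

Lemma le_fin_ex (R : realType) (e : \bar R) (r : R) : e != -oo%E -> (e <= r%:E)%E ->
  exists u, e = u%:E /\ u <= r.
Proof. by case: e => // u _; rewrite lee_fin => h; exists u. Qed.

Lemma line_eq (R : realType) (n : nat) (x p : 'rV[R]_n) (t : R) :
  x + t *: (p - x) = t *: p + (1 - t) *: x.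
Proof. by rewrite scalerBr scalerBl scale1r addrCA addrA. Qed.

Lemma Hline (R : realType) (n : nat) (h : 'rV[R]_n -> \bar R) x p a b (t : R) :
  convex_ext h -> h x = a%:E -> h p = b%:E -> 0 <= t <= 1 ->
  (h (x + t *: (p - x))%R <= ((t * b + (1 - t) * a)%R)%:E)%E.
Proof.
move=> cvx hx hp ht; rewrite line_eq.
apply: le_trans (cvx p x t ht _ _) _; rewrite ?hp ?hx ?ltry //.

Qed.

Lemma dot0r (R : realType) (n : nat) (u : 'rV[R]_n) : dot u 0 = 0.
Proof. by rewrite -(scale0r (0 : 'rV[R]_n)) dotZr mul0r. Qed.

Lemma enorm2_0 (R : realType) (n : nat) : enorm2 (0 : 'rV[R]_n) = 0.
Proof. by rewrite /enorm2 dot0r. Qed.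

Lemma domF_Fle (R : realType) (n m : nat) (G : 'I_m -> 'rV[R]_n -> R) H y x :
  domF H x -> Fle G H y x -> domF H y.
Proof.
move=> dx hle j; have := hle j; rewrite /Fval.
have := dx j; case: (H j x) => [r||] hx; case: (H j y) => [r0||] //= h; rewrite ?ltry //.
Qed.

Definition tmin (R : realType) (m : nat) (L : 'I_m -> R) (tau1 gamma : R) :=
  tau1 ^+ 2 * Num.min 1 (gamma / (2 * \sum_i L i)).

Arguments fin_ex {R e}.
Arguments le_fin_ex {R e r}.
Arguments Hline {R n h x p a b t}.
Arguments dot0r {R n}.
Arguments enorm2_ge0 {R n}.
Arguments enorm2Z {R n}.
Arguments domF_Fle {R n m G H y x}.

Lemma step_lemma (R : realType) (n m : nat) (G : 'I_m -> 'rV[R]_n -> R)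
  (gradG : 'I_m -> 'rV[R]_n -> 'rV[R]_n) (H : 'I_m -> 'rV[R]_n -> \bar R)
  (L : 'I_m -> R) (alpha gamma tau1 tau2 : R) (xk x' : 'rV[R]_n) :
  (0 < m)%N ->
  (forall j y, differentiable (G j) y /\
     forall h, 'd (G j) y h = dot (gradG j y) h) ->
  (forall j, convex_real (G j)) ->
  (forall j y, H j y != -oo%E) ->
  (forall j, convex_ext (H j)) ->
  (forall j, 0 < L j) ->
  (forall j y z, enorm (gradG j y - gradG j z) <= L j * enorm (y - z)) ->
  0 < alpha -> 0 < gamma -> gamma < 2 / alpha ->
  0 < tau1 -> tau1 < tau2 -> tau2 < 1 ->
  domF H xk -> mpg_step alpha gamma tau1 tau2 G gradG H xk x' ->
  exists th : R, theta alpha gradG H xk = th%:E /\ th <= 0 /\ domF H x' /\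
    Fle G H x' xk /\
    exists j, (Fval G H j x' <= Fval G H j xk +
                 (@tmin R m L tau1 gamma * (1 - gamma * alpha / 2) * th)%:E)%E.
Proof.
move=> hm hG hcG hHn hcH hL hlip a0 g0 ga t10 t12 t21 dom.
move=> [p [js [s [N1 [tk [hp rest]]]]]].
move: rest => /=; set d := p - xk.
move=> [hmax [s0 [srec [dN1 [nN1 [hcase ex']]]]]].
pose hx j := fine (H j xk).
have Ehx j : H j xk = (hx j)%:E := fin_ex (hHn j xk) (dom j).
have psixx : (psi gradG H xk xk <= 0)%E.
  rewrite /psi; apply: bigmax_le => //= j _.
  by rewrite subrr dot0r Ehx -EFinB subrr -EFinD addr0.
have phixx : (phi alpha gradG H xk xk <= 0)%E.
  by rewrite /phi subrr enorm2_0 mulr0 adde0.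
have phip0 := le_trans (hp xk) phixx.
have hHp j : (H j p < +oo)%E.
  rewrite ltNge leye_eq; apply/negP => /eqP Hpy.
  have : (psi gradG H xk p = +oo)%E.
    apply/eqP; rewrite -leye_eq; apply: le_trans (le_bigmax _ _ j).
    by rewrite Hpy Ehx.
  by move=> psiy; move: phip0; rewrite /phi psiy.
pose hpv j := fine (H j p).
have Ehp j : H j p = (hpv j)%:E := fin_ex (hHn j p) (hHp j).
pose Tm j := dot (gradG j xk) d + (hpv j - hx j).
have Epsi : psi gradG H xk p = (\big[maxe/-oo]_j (Tm j)%:E)%E.
  by rewrite /psi; apply: eq_bigr => j _; rewrite Ehp Ehx -EFinB -EFinD.
pose j0 : 'I_m := Ordinal hm.
have psi_fin : psi gradG H xk p = (fine (psi gradG H xk p))%:E.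
  apply: fin_ex.
    rewrite Epsi gt_eqF //; apply: lt_le_trans (le_bigmax _ _ j0).
    exact: ltNyr.
  rewrite ltNge leye_eq; apply/negP => /eqP e; move: phip0; rewrite /phi e.
  by [].
set Psi := fine (psi gradG H xk p).
have TmPsi j : Tm j <= Psi.
  by rewrite -lee_fin -psi_fin Epsi; exact: le_bigmax.
set E := enorm2 d.
set Q := (2 * alpha)^-1 * E.
have E0 : 0 <= E := enorm2_ge0 d.
have Q0 : 0 <= Q by rewrite /Q mulr_ge0 // invr_ge0 mulr_ge0 // ltW.
have Ephi : phi alpha gradG H xk p = (Psi + Q)%:E.
  by rewrite /phi psi_fin EFinD.
have Eth : theta alpha gradG H xk = (Psi + Q)%:E.
  apply/le_anti/andP; split.
    by rewrite -Ephi; apply: ereal_inf_lbound; exists p.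
  by apply/ereal_infP => _ [u _ <-]; rewrite -Ephi; exact: hp.
set sv := gamma * alpha / 2.
have sv0 : 0 < sv by rewrite /sv divr_gt0 // mulr_gt0.
have sv1 : sv < 1.
  rewrite /sv ltr_pdivrMr // mul1r -ltr_pdivlMr //.
have svb : 0 <= sv <= 1 by rewrite (ltW sv0) (ltW sv1).
have hu : (psi gradG H xk (xk + sv *: d) <= (sv * Psi)%:E)%E.
  rewrite /psi; apply: bigmax_le => [|j _]; first exact: leNye.
  have := Hline (hcH j) (Ehx j) (Ehp j) svb.
  move=> /(le_fin_ex (hHn j _)) [u [-> hu]].
  have -> : xk + sv *: d - xk = sv *: d by rewrite addrAC subrr add0r.
  rewrite dotZr Ehx -EFinB -EFinD lee_fin.
  have := TmPsi j; rewrite /Tm => h1.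
  have h2 := ler_wpM2l (ltW sv0) h1.
  nra.
have hq := hp (xk + sv *: d).
have e1 : xk + sv *: d - xk = sv *: d by rewrite addrAC subrr add0r.
rewrite Ephi /phi e1 enorm2Z -/E in hq.
have := leeD2r (((2 * alpha)^-1 * (sv ^+ 2 * E))%:E) hu.
move=> /(le_trans hq); rewrite -EFinD lee_fin => hq2.
have EQ : E = 2 * alpha * Q by rewrite /Q mulrA mulfV ?mul1r // mulf_neq0 // gt_eqF.
have hq3 : Psi + Q <= sv * Psi + sv ^+ 2 * Q.
  by move: hq2; rewrite /Q mulrCA.
have W : Psi + (1 + sv) * Q <= 0 by nra.
have th0 : Psi + Q <= 0 by nra.
have KF : Psi + gamma / 2 * E <= (1 - sv) * (Psi + Q).
  have -> : gamma / 2 * E = 2 * sv * Q by rewrite EQ /sv; field.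
  have h1 : sv * (Psi + (1 + sv) * Q) <= 0 by nra.
  have h2 : 0 <= (1 - sv) ^+ 2 * Q by rewrite mulr_ge0 // sqr_ge0.
  lra.
set th := Psi + Q.
set c := 1 - sv.
have c0 : 0 < c by rewrite /c subr_gt0.
have dec j t : 0 <= t <= 1 -> descent_cond gamma G gradG xk d j t ->
    (Fval G H j (xk + t *: d) <= (G j xk + hx j + t * c * th)%:E)%E.
  move=> ht hd; rewrite /Fval.
  have := Hline (hcH j) (Ehx j) (Ehp j) ht.
  move=> /(le_fin_ex (hHn j _)) [u [-> hu']].
  rewrite -EFinD lee_fin.
  have h1 := ler_wpM2l (proj1 (andP ht)) (TmPsi j).
  have h2 := ler_wpM2l (proj1 (andP ht)) KF.
  move: hd; rewrite /descent_cond => hd.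
  rewrite /Tm in h1; rewrite -/E in hd; rewrite /th /c.
  lra.
have spos i : 0 < s i /\ s i <= 1.
  elim: i => [|i [IH1 IH2]]; first by rewrite s0 ltr01 lexx.
  have /andP [h1 h2] := srec i.
  split; first by apply: lt_le_trans h1; rewrite mulr_gt0.
  apply: le_trans h2 _; nra.
set Ls := \sum_i L i.
have LLs j : L j <= Ls.
  rewrite /Ls (bigD1 j) //= lerDl; apply: sumr_ge0 => i _; exact: ltW.
have Ls0 : 0 < Ls := lt_le_trans (hL j0) (LLs j0).
set T := gamma / (2 * Ls).
have T0 : 0 < T by rewrite /T divr_gt0 // mulr_gt0.
have desc_ok j t : 0 <= t <= T -> descent_cond gamma G gradG xk d j t.
  move=> /andP [t0 tT].
  apply: (@descent_lemma _ _ _ G gradG (L j) gamma t j xk d (hG j) (hcG j) (hlip j) (ltW (hL j)) t0).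
  have TL : T * Ls = gamma / 2 by rewrite /T; field; rewrite gt_eqF.
  have h1 := ler_wpM2r (ltW (hL j)) tT.
  have h2 := ler_wpM2l (ltW T0) (LLs j).
  lra.
have fail_big j i : ~ descent_cond gamma G gradG xk d j (s i) -> T < s i.
  move=> nd; rewrite ltNge; apply/negP => siT; apply: nd; apply: desc_ok.
  by rewrite siT ltW // (proj1 (spos i)).
set m0 := Num.min 1 T.
have m00 : 0 < m0 by rewrite /m0 lt_min ltr01 T0.
have m01 : m0 <= 1 by rewrite /m0 ge_min lexx.
have m0T : m0 <= T by rewrite /m0 ge_min lexx orbT.
have hN1 : tau1 * m0 <= s N1.
  move: nN1; case: (N1) => [|i] nN1'; first by rewrite s0; nra.
  have := fail_big js i (nN1' i (ltnSn i)).
  have /andP [h1 _] := srec i.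
  move=> h; apply: le_trans h1; nra.
have tmE : @tmin R m L tau1 gamma = tau1 ^+ 2 * m0 by [].
rewrite tmE -/sv -/c.
have t11 : tau1 < 1 := lt_trans t12 t21.
have FxE j : Fval G H j xk = (G j xk + hx j)%:E by rewrite /Fval Ehx EFinD.
have cth0 : c * th <= 0 := mulr_ge0_le0 (ltW c0) th0.
have fin j : (Fval G H j x' <= (G j xk + hx j + tk * c * th)%:E)%E ->
    tau1 ^+ 2 * m0 <= tk ->
    (Fval G H j x' <= Fval G H j xk + (tau1 ^+ 2 * m0 * c * th)%:E)%E.
  move=> h tkb; apply: le_trans h _; rewrite FxE -EFinD lee_fin lerD2l.
  have h0 : 0 <= tk - tau1 ^+ 2 * m0 by rewrite subr_ge0.
  have := mulr_ge0_le0 h0 cth0.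
  rewrite -!mulrA; nra.
exists th; split; first exact: Eth.
split; first exact: th0.
case: hcase => [[hF etk] | [nF [N2 [lt12 [dall [nmid etk]]]]]].
  have hFx : Fle G H x' xk by rewrite ex' etk.
  split; first exact: domF_Fle dom hFx.
  split; first exact: hFx.
  exists js; apply: fin.
    rewrite ex' etk; apply: dec => //.
    by rewrite (ltW (proj1 (spos N1))) (proj2 (spos N1)).
  rewrite etk; apply: le_trans hN1; rewrite expr2 -mulrA ler_piMl //.
  - by rewrite mulr_ge0 // ltW.
  - exact: ltW.
have tkb : tau1 ^+ 2 * m0 <= tk.
  rewrite etk; move: lt12 nmid; case: (N2) => // i lt1i nmid'.
  have /andP [h1 _] := srec i.
  apply: le_trans h1; rewrite expr2 -mulrA ler_wpM2l ?(ltW t10) //.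
  have [ei|nei] := eqVneq i N1.
    by rewrite ei.
  have lt1i' : (N1 < i)%N by rewrite ltn_neqAle eq_sym nei -ltnS.
  have := nmid' i; rewrite lt1i' ltnSn => /(_ isT) /existsNP [j nj].
  have := fail_big j i nj; nra.
have tk01 : 0 <= tk <= 1.
  by rewrite etk (ltW (proj1 (spos N2))) (proj2 (spos N2)).
have decall j : (Fval G H j x' <= (G j xk + hx j + tk * c * th)%:E)%E.
  by rewrite ex'; apply: dec => //; rewrite etk.
have hFx : Fle G H x' xk.
  move=> j; apply: le_trans (decall j) _; rewrite FxE lee_fin.
  rewrite -mulrA gerDl; apply: mulr_ge0_le0 => //; by case/andP: tk01.
split; first exact: domF_Fle dom hFx.
split; first exact: hFx.
by exists js; apply: fin.
Qed.

Fixpoint frz (T : Type) (x : nat -> T) (b : nat -> bool) (k : nat) : T :=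
  match k with 0%N => x 0%N | k'.+1 => if b k'.+1 then x k'.+1 else frz T x b k' end.

Arguments step_lemma {R n m G gradG H L alpha gamma tau1 tau2 xk x'}.

Lemma Fval_fin (R : realType) (n m : nat) (G : 'I_m -> 'rV[R]_n -> R) H j w :
  (forall j y, H j y != -oo%E) -> domF H w ->
  Fval G H j w = (G j w + fine (H j w))%:E.
Proof. by move=> hn dw; rewrite /Fval (fin_ex (hn j w) (dw j)) EFinD. Qed.

Arguments Fval_fin {R n m G H j w}.

Theorem mainTheorem7 (R : realType) (n m : nat)
  (G : 'I_m -> 'rV[R]_n -> R) (gradG : 'I_m -> 'rV[R]_n -> 'rV[R]_n)
  (H : 'I_m -> 'rV[R]_n -> \bar R) (L : 'I_m -> R)
  (alpha gamma tau1 tau2 : R) (x : nat -> 'rV[R]_n) :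
  (0 < m)%N ->
  (forall j y, differentiable (G j) y /\
     forall h, 'd (G j) y h = dot (gradG j y) h) ->
  (forall j, continuous (gradG j)) ->
  (forall j, convex_real (G j)) ->
  (forall j y, H j y != -oo%E) ->
  (forall j, exists y, (H j y < +oo)%E) ->
  (forall j, convex_ext (H j)) ->
  (forall j, {within [set y | (H j y < +oo)%E], continuous (H j)}) ->
  domF H !=set0 ->
  closed (domF H) ->
  (forall y : nat -> 'rV[R]_n, (forall k, domF H (y k)) ->
     (forall k, Fle G H (y k.+1) (y k)) ->
     exists2 z, domF H z & forall k, Fle G H z (y k)) ->
  (forall j, 0 < L j) ->
  (forall j y z, enorm (gradG j y - gradG j z) <= L j * enorm (y - z)) ->
  0 < alpha -> 0 < gamma -> gamma < 2 / alpha ->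
  0 < tau1 -> tau1 < tau2 -> tau2 < 1 ->
  domF H (x 0%N) ->
  mpg_run alpha gamma tau1 tau2 G gradG H x ->
  exists2 C : R, 0 < C &
    forall eps : R, 0 < eps ->
      exists k : nat, k%:R <= C / eps /\ (`|theta alpha gradG H (x k)| <= eps%:E)%E.
Proof.
move=> hm hG _ hcG hHn _ hcH _ _ _ A1 hL hlip a0 g0 ga t10 t12 t21 dom0 run.
set c := 1 - gamma * alpha / 2.
set tm := @tmin R m L tau1 gamma.
have c0 : 0 < c.
  rewrite /c subr_gt0 ltr_pdivrMr // mul1r -ltr_pdivlMr //.
have tm0 : 0 < tm.
  rewrite /tm /tmin mulr_gt0 ?exprn_gt0 // lt_min ltr01 /= divr_gt0 // mulr_gt0 //.
  apply: (lt_le_trans (hL (Ordinal hm))).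
  rewrite (bigD1 (Ordinal hm)) //= lerDl; apply: sumr_ge0 => i _; exact: ltW.
pose P k := forall i, (i < k)%N -> theta alpha gradG H (x i) <> 0%E.
have PS k : P k.+1 -> P k by move=> h i ik; apply: h; rewrite ltnS ltnW.
have domP k : P k -> domF H (x k).
  elim: k => [|k IH] Pk //.
  have [th [_ [_ [dk _]]]] := step_lemma hm hG hcG hHn hcH hL hlip a0 g0 ga t10 t12 t21
    (IH (PS _ Pk)) (run k (Pk k (ltnSn k))).
  exact: dk.
have stepP k : P k.+1 -> exists th : R, theta alpha gradG H (x k) = th%:E /\ th <= 0 /\
    Fle G H (x k.+1) (x k) /\
    exists j, (Fval G H j (x k.+1) <= Fval G H j (x k) + (tm * c * th)%:E)%E.
  move=> Pk.
  have [th [e1 [e2 [_ [e3 e4]]]]] := step_lemma hm hG hcG hHn hcH hL hlip a0 g0 ga t10 t12 t21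
    (domP k (PS _ Pk)) (run k (Pk k (ltnSn k))).
  by exists th.
pose b k := `[< P k >].
pose y := @frz _ x b.

have yx k : P k -> y k = x k.
  by case: k => [|k] Pk //; rewrite /y /= /b asboolT.
have ydom k : domF H (y k).
  elim: k => [|k IH]; first exact: dom0.
  rewrite /y /=; case: ifP => [/asboolP|_]; [exact: domP | exact: IH].
have ymono k : Fle G H (y k.+1) (y k).
  rewrite /y /=; case: ifPn => [/asboolP Pk|_]; last by move=> j; exact: lexx.
  rewrite -/(y k) (yx k (PS _ Pk)).
  by have [th [_ [_ [hF _]]]] := stepP k Pk.
have [z domz hz] := A1 y ydom ymono.
have zle k : P k -> Fle G H z (x k) by move=> Pk; rewrite -(yx k Pk).
pose f j k := fine (Fval G H j (x k)).
pose S k := \sum_j f j k.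
pose th k := fine (theta alpha gradG H (x k)).
pose Sz := \sum_j fine (Fval G H j z).
have fle j a b0 : domF H a -> domF H b0 -> (Fval G H j a <= Fval G H j b0)%E ->
    fine (Fval G H j a) <= fine (Fval G H j b0).
  move=> da db; rewrite (Fval_fin hHn da) (Fval_fin hHn db) lee_fin //.
have bound K : P K -> S K + tm * c * (\sum_(k < K) (- th k)) <= S 0%N.
  elim: K => [|K IH] PK; first by rewrite big_ord0 mulr0 addr0.
  have [t [et [t0 [hF [j hj]]]]] := stepP K PK.
  have dK := domP K (PS _ PK); have dK1 := domP K.+1 PK.
  have thK : th K = t by rewrite /th et.
  rewrite big_ord_recr /= thK.
  have := IH (PS _ PK).
  have hj' : f j K.+1 <= f j K + tm * c * t.
    move: hj; rewrite /f (Fval_fin hHn dK1) (Fval_fin hHn dK) -EFinD lee_fin //.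
  have rest : \sum_(i | i != j) f i K.+1 <= \sum_(i | i != j) f i K.
    by apply: ler_sum => i _; apply: fle => //; exact: hF.
  have eS1 : S K.+1 = f j K.+1 + \sum_(i | i != j) f i K.+1 by rewrite /S (bigD1 j).
  have eS0 : S K = f j K + \sum_(i | i != j) f i K by rewrite /S (bigD1 j).
  set A := \sum_(k < K) - th k.
  have eA : tm * c * (A + - t) = tm * c * A - tm * c * t by ring.
  rewrite eS1 eS0 eA; lra.
have Szle K : P K -> Sz <= S K.
  by move=> PK; apply: ler_sum => j _; apply: fle => //; [exact: domP | exact: zle].
set D := (S 0%N - Sz) / (tm * c).
have tmc : 0 < tm * c by rewrite mulr_gt0.
have sumD K : P K -> \sum_(k < K) (- th k) <= D.
  move=> PK; rewrite /D ler_pdivlMr // mulrC.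
  have := bound K PK; have := Szle K PK; lra.
have D0 : 0 <= D.
  have := sumD 0%N (fun i (h : (i < 0)%N) => False_ind _ (notF h)).
  by rewrite big_ord0.
exists (D + 1); first by lra.
move=> eps e0.
set N := Num.truncn (D / eps).
have DeN : D / eps < N.+1%:R := truncnS_gt _.
have NDe : N%:R <= D / eps by rewrite truncn_le divr_ge0 // ltW.
have NC : N%:R <= (D + 1) / eps.
  apply: le_trans NDe _; rewrite ler_pM2r ?invr_gt0 //; lra.
apply: contrapT => hno.
have hno' k : (k <= N)%N -> ~ (`|theta alpha gradG H (x k)| <= eps%:E)%E.
  move=> kN hk; apply: hno; exists k; split => //.
  by apply: le_trans NC; rewrite ler_nat.
have PN : P N.+1.
  move=> i iN e; apply: (hno' i); first by rewrite -ltnS.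
  by rewrite e /= normr0 lee_fin ltW.
have big : N.+1%:R * eps <= \sum_(k < N.+1) (- th k).
  have : \sum_(k < N.+1) eps <= \sum_(k < N.+1) (- th k).
    apply: ler_sum => k _.
    have kN : (k <= N)%N by rewrite -ltnS.
    have [t [et [t0 _]]] := stepP k (fun i ik => PN i (leq_trans ik (ltn_ord k))).
    have := hno' k kN; rewrite /th et /= lee_fin ler0_norm // => hn.
    by case: (leP eps (- t)) => // h; exfalso; apply: hn; exact: ltW.
  by rewrite sumr_const card_ord mulr_natl.
have := sumD _ PN.
have : D < N.+1%:R * eps by rewrite -ltr_pdivrMr.
lra.
Qed.
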